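(* Let $b\ge2$, $\alpha_1,\alpha_2>0$, and let $y\in[0,1)$ be a $b$-adic rational number. Then the scaling function of the pair $(L_{\alpha_1}^b,L_{\alpha_2}^{b,y})$, based on second-order oscillations, is $$\zeta(r_1,r_2)=\begin{cases}\alpha_1r_1+\alpha_2r_2, & \text{if } 1-\alpha_1r_1-\alpha_2r_2\ge0,\\ 1, & \text{if } 1-\alpha_1r_1-\alpha_2r_2<0.\end{cases}$$
   Context: The saw-tooth function is $\{x\}=x-\lfloor x\rfloor-\frac12$ if $x\notin\mathbb{Z}$ and $\{x\}=0$ if $x\in\mathbb{Z}$. For $\alpha>0$ the Lévy function is $L_\alpha^b(x)=\sum_{i\geq1}\{b^ix\}\,b^{-\alpha i}$ and $L_\alpha^{b,y}(x)=L_\alpha^b(x-y)$. $b$-adic grid: $\lambda=\lambda(j,k)=[kb^{-j},(k+1)b^{-j})$, $3\lambda=[(k-1)b^{-j},(k+2)b^{-j})$, $\Lambda_j$ the set of the $b^j$ such intervals contained in $[0,1)$. Second-order difference $\Delta_f^2(x,h)=f(x+2h)-2f(x+h)+f(x)$; oscillation $d_\lambda(f)=\sup\{|\Delta_f^2(x,h)|: x,x+2h\in3\lambda\}$; $d_\lambda^{(1)}=d_\lambda(L_{\alpha_1}^b)$, $d_\lambda^{(2)}=d_\lambda(L_{\alpha_2}^{b,y})$. Structure function $S(r,j)=b^{-j}\sum_{\lambda\in\Lambda_j}(d_\lambda^{(1)})^{r_1}(d_\lambda^{(2)})^{r_2}$, scaling function $\zeta(r)=\liminf_{j\to\infty}\frac{\log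 S(r,j)}{\log b^{-j}}$. *)

(* Defs.v *)
From Stdlib Require Import Reals.
From Coquelicot Require Import Coquelicot.
Open Scope R_scope.

Definition saw (x : R) : R :=
  let n := IZR (Int_part x) in
  if Req_EM_T x n then 0 else x - n - 1/2.

Definition levy (b : nat) (alpha x : R) : R :=
  Series (fun n : nat =>
    saw ((INR b) ^ (S n) * x) * Rpower (INR b) (- alpha * INR (S n))).

Definition levy_shift (b : nat) (alpha y x : R) : R := levy b alpha (x - y).

Definition delta2 (f : R -> R) (x h : R) : R := f (x + 2 * h) - 2 * f (x + h) + f x.

Definition in3lambda (b j : nat) (k : nat) (x : R) : Prop :=
  (INR k - 1) / (INR b) ^ j <= x /\ x < (INR k + 2) / (INR b) ^ j.

Definition osc (f : R -> R) (b j k : nat) : R :=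
  real (Lub_Rbar (fun z => exists x h,
          in3lambda b j k x /\ in3lambda b j k (x + 2 * h) /\
          z = Rabs (delta2 f x h))).

Definition struct_fun (b : nat) (a1 a2 y r1 r2 : R) (j : nat) : R :=
  / (INR b) ^ j *
  sum_n (fun k : nat =>
           Rpower (osc (levy b a1) b j k) r1 *
           Rpower (osc (levy_shift b a2 y) b j k) r2)
        (b ^ j - 1)%nat.

Definition scaling_fun (b : nat) (a1 a2 y r1 r2 : R) : Rbar :=
  LimInf_seq (fun j : nat => ln (struct_fun b a1 a2 y r1 r2 j) / ln (/ (INR b) ^ j)).

Definition b_adic (b : nat) (y : R) : Prop :=
  exists (m : nat) (k : Z), y = IZR k / (INR b) ^ m.

(* Main.v *)
Require Import Defs.
From Stdlib Require Import Reals Lra Lia ZArith Psatz.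
From Coquelicot Require Import Coquelicot.
Open Scope R_scope.

Fixpoint sumR (f : nat -> R) (n : nat) : R :=
  match n with O => 0 | S n' => sumR f n' + f n' end.

Lemma sumR_ext f g n : (forall i, (i < n)%nat -> f i = g i) -> sumR f n = sumR g n.
Proof. induction n; simpl; intros H; auto. rewrite IHn by (intros; apply H; lia). rewrite H by lia. auto. Qed.

Lemma sumR_le f g n : (forall i, (i < n)%nat -> f i <= g i) -> sumR f n <= sumR g n.
Proof. induction n; simpl; intros H; [lra|]. assert (H1:=H n (Nat.lt_succ_diag_r n)). assert (sumR f n <= sumR g n) by (apply IHn; intros; apply H; lia). lra. Qed.

Lemma sumR_nonneg f n : (forall i, (i < n)%nat -> 0 <= f i) -> 0 <= sumR f n.
Proof. induction n; simpl; intros H; [lra|]. assert (H1:=H n (Nat.lt_succ_diag_r n)). assert (0 <= sumR f n) by (apply IHn; intros; apply H; lia). lra. Qed.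

Lemma sumR_ge_term f n i : (forall i, (i < n)%nat -> 0 <= f i) -> (i < n)%nat -> f i <= sumR f n.
Proof. induction n; simpl; intros H Hi; [lia|].
  destruct (Nat.eq_dec i n) as [->|Hne].
  - assert (0 <= sumR f n) by (apply sumR_nonneg; intros; apply H; lia). lra.
  - assert (f i <= sumR f n) by (apply IHn; [intros; apply H; lia| lia]). assert (H1:=H n (Nat.lt_succ_diag_r n)). lra. Qed.

Lemma sumR_plus f g n : sumR (fun i => f i + g i) n = sumR f n + sumR g n.
Proof. induction n; simpl; [lra|]. rewrite IHn. lra. Qed.

Lemma sumR_scal c f n : sumR (fun i => c * f i) n = c * sumR f n.
Proof. induction n; simpl; [lra|]. rewrite IHn. lra. Qed.

Lemma sumR_const c n : sumR (fun _ => c) n = INR n * c.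
Proof. induction n; simpl sumR; [simpl; lra|]. rewrite IHn, S_INR. lra. Qed.

Lemma sumR_add f n m : sumR f (n + m) = sumR f n + sumR (fun v => f (n + v)%nat) m.
Proof. induction m; simpl. rewrite Nat.add_0_r; lra. rewrite Nat.add_succ_r. simpl. rewrite IHm. lra. Qed.

Lemma sumR_block f a D : sumR f (a * D) = sumR (fun u => sumR (fun v => f (u * D + v)%nat) D) a.
Proof. induction a; simpl; auto. replace (D + a * D)%nat with (a*D + D)%nat by lia. rewrite sumR_add, IHa. apply f_equal. apply sumR_ext; intros; f_equal; lia. Qed.

Lemma sumR_swap (F : nat -> nat -> R) n m :
  sumR (fun k => sumR (fun i => F k i) n) m = sumR (fun i => sumR (fun k => F k i) m) n.
Proof. induction m; simpl.
  - induction n; simpl; auto. rewrite <- IHn; lra.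
  - rewrite IHm, <- sumR_plus. auto. Qed.

Lemma sum_n_sumR f N : (0 < N)%nat -> sum_n f (N - 1) = sumR f N.
Proof. intros H. destruct N; [lia|]. replace (S N - 1)%nat with N by lia.
  rewrite sum_n_Reals. clear H. induction N; simpl; [lra|]. simpl in IHN. rewrite IHN. auto. Qed.

Fixpoint mfind (P : nat -> bool) (n : nat) : nat :=
  match n with O => O | S n' => if P O then O else S (mfind (fun i => P (S i)) n') end.

Lemma mfind_spec n : forall P, P n = true ->
  P (mfind P n) = true /\ (mfind P n <= n)%nat /\ (forall i, (i < mfind P n)%nat -> P i = false).
Proof. induction n; intros P H; simpl.
  - split; auto. split; auto. intros; lia.
  - destruct (P O) eqn:E. split; auto. split. lia. intros; lia.
    destruct (IHn (fun i => P (S i)) H) as [H1 [H2 H3]]. split; auto. split. lia.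
    intros [|i] Hi; auto. apply H3. lia. Qed.

Definition zdvd (D x : Z) : bool := Z.eqb (x mod D) 0.
Definition test (b j : nat) (k : Z) (i : nat) : bool :=
  let D := Z.of_nat (b ^ (j - i)) in (zdvd D (k - 1) || zdvd D k || zdvd D (k + 1))%bool.
Definition mlev (b j : nat) (k : Z) : nat := mfind (test b j k) j.

Lemma zdvd_iff D x : D <> 0%Z -> (zdvd D x = true <-> (D | x)%Z).
Proof. intros H. unfold zdvd. rewrite Z.eqb_eq. apply Z.mod_divide; auto. Qed.

Lemma Dpos b n : (1 <= b)%nat -> (0 < Z.of_nat (b ^ n))%Z.
Proof. intros H. assert (0 < b ^ n)%nat by (apply Nat.neq_0_lt_0, Nat.pow_nonzero; lia). lia. Qed.

Lemma test_iff b j k i : (1 <= b)%nat ->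
  (test b j k i = true <-> exists e, (-1 <= e <= 1)%Z /\ (Z.of_nat (b ^ (j - i)) | k + e)%Z).
Proof. intros Hb. assert (HD := Dpos b (j - i) Hb). unfold test.
  rewrite !Bool.orb_true_iff, !zdvd_iff by lia. split.
  - intros [[H|H]|H].
    + exists (-1)%Z. split; [lia|]. replace (k + -1)%Z with (k-1)%Z by lia. auto.
    + exists 0%Z. split; [lia|]. rewrite Z.add_0_r. auto.
    + exists 1%Z. split; [lia|]. auto.
  - intros [e [He H]]. assert (e = -1 \/ e = 0 \/ e = 1)%Z as [ -> | [ -> | -> ] ] by lia.
    + left; left. replace (k-1)%Z with (k + -1)%Z by lia. auto.
    + left; right. rewrite Z.add_0_r in H. auto.
    + right; auto. Qed.

Lemma test_j b j k : (1 <= b)%nat -> test b j k j = true.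
Proof. intros Hb. apply test_iff; auto. exists 0%Z. split; [lia|]. rewrite Nat.sub_diag. simpl. apply Z.divide_1_l. Qed.

Lemma mlev_spec b j k : (1 <= b)%nat ->
  test b j k (mlev b j k) = true /\ (mlev b j k <= j)%nat /\ (forall i, (i < mlev b j k)%nat -> test b j k i = false).
Proof. intros Hb. apply mfind_spec. apply test_j; auto. Qed.

Lemma pow_dvd_Z b n m : (n <= m)%nat -> (Z.of_nat (b ^ n) | Z.of_nat (b ^ m))%Z.
Proof. intros H. replace m with (n + (m - n))%nat by lia. rewrite Nat.pow_add_r, Nat2Z.inj_mul.
  apply Z.divide_factor_l. Qed.

Lemma test_mono b j k i i' : (1 <= b)%nat -> (i <= i')%nat -> test b j k i = true -> test b j k i' = true.
Proof. intros Hb Hi H. apply test_iff in H; auto. apply test_iff; auto. destruct H as [e [He H]].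
  exists e. split; auto. eapply Z.divide_trans; [|apply H]. apply pow_dvd_Z. lia. Qed.

Lemma test_shift b j m0 k c i : (1 <= b)%nat -> (m0 <= i)%nat ->
  (Z.of_nat (b ^ (j - m0)) | c)%Z -> test b j k i = test b j (k - c) i.
Proof. intros Hb Hi Hc.
  assert (Hc' : (Z.of_nat (b ^ (j - i)) | c)%Z) by (eapply Z.divide_trans; [apply pow_dvd_Z|apply Hc]; lia).
  destruct Hc' as [t Ht]. unfold test, zdvd.
  set (D := Z.of_nat (b ^ (j - i))). assert (HD : D <> 0%Z) by (pose proof (Dpos b (j-i) Hb); unfold D; lia).
  replace (k - c - 1)%Z with ((k - 1) + (-t) * D)%Z by (unfold D in *; lia).
  replace (k - c + 1)%Z with ((k + 1) + (-t) * D)%Z by (unfold D in *; lia).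
  replace (k - c)%Z with (k + (-t) * D)%Z by (unfold D in *; lia).
  rewrite !Z.mod_add by auto. auto. Qed.

Lemma mlev_le_shift b j m0 k c : (1 <= b)%nat -> (m0 <= j)%nat ->
  (Z.of_nat (b ^ (j - m0)) | c)%Z -> (mlev b j k <= Nat.max (mlev b j (k - c)) m0)%nat.
Proof. intros Hb Hj Hc.
  destruct (mlev_spec b j (k - c) Hb) as [H1 [H2 H3]].
  destruct (mlev_spec b j k Hb) as [G1 [G2 G3]].
  set (i := Nat.max (mlev b j (k - c)) m0).
  assert (Ht : test b j (k - c) i = true) by (eapply test_mono; [auto| |apply H1]; unfold i; lia).
  rewrite <- test_shift with (m0 := m0) in Ht; auto; [|unfold i; lia].
  destruct (Nat.le_gt_cases (mlev b j k) i) as [|Hlt]; auto.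
  rewrite G3 in Ht; [discriminate|auto]. Qed.

Lemma mlev_diff b j m0 k c : (1 <= b)%nat -> (m0 <= j)%nat ->
  (Z.of_nat (b ^ (j - m0)) | c)%Z ->
  (mlev b j k <= mlev b j (k - c) + m0)%nat /\ (mlev b j (k - c) <= mlev b j k + m0)%nat.
Proof. intros Hb Hj Hc. split.
  - pose proof (mlev_le_shift b j m0 k c Hb Hj Hc). lia.
  - pose proof (mlev_le_shift b j m0 (k - c) (- c) Hb Hj) as H.
    replace (k - c - - c)%Z with k in H by lia. assert (mlev b j (k - c) <= Nat.max (mlev b j k) m0)%nat by (apply H; apply Z.divide_opp_r; auto). lia. Qed.

Lemma DZ_real b n : IZR (Z.of_nat (b ^ n)) = INR b ^ n.
Proof. rewrite <- INR_IZR_INZ, pow_INR. auto. Qed.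

Lemma Bpos b n : (1 <= b)%nat -> 0 < INR b ^ n.
Proof. intros H. apply pow_lt. apply lt_0_INR. lia. Qed.

Lemma div_split b i j N : (1 <= b)%nat -> (i <= j)%nat ->
  IZR N / INR b ^ i = IZR (N * Z.of_nat (b ^ (j - i))) / INR b ^ j.
Proof. intros Hb Hij. rewrite mult_IZR, DZ_real.
  replace j with (i + (j - i))%nat at 2 by lia. rewrite pow_add.
  pose proof (Bpos b i Hb). pose proof (Bpos b (j-i) Hb). field. lra. Qed.

Lemma test_true_real b j k i : (1 <= b)%nat -> (i <= j)%nat -> test b j k i = true ->
  exists N, (IZR k - 1) / INR b ^ j <= IZR N / INR b ^ i <= (IZR k + 1) / INR b ^ j.
Proof. intros Hb Hij H. apply test_iff in H; auto. destruct H as [e [He [N HN]]].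
  exists N. rewrite (div_split b i j N Hb Hij), <- HN. pose proof (Bpos b j Hb).
  rewrite plus_IZR. assert (-1 <= IZR e <= 1) by (split; apply IZR_le; lia).
  unfold Rdiv. split; apply Rmult_le_compat_r; try (left; apply Rinv_0_lt_compat; auto); lra. Qed.

Lemma test_false_real b j k i : (1 <= b)%nat -> (i <= j)%nat -> test b j k i = false ->
  forall N, ~ ((IZR k - 1) / INR b ^ j <= IZR N / INR b ^ i < (IZR k + 2) / INR b ^ j).
Proof. intros Hb Hij H N [H1 H2]. rewrite (div_split b i j N Hb Hij) in H1, H2.
  pose proof (Bpos b j Hb).
  set (M := (N * Z.of_nat (b ^ (j - i)))%Z) in *.
  assert (G1 : IZR k - 1 <= IZR M).
  { apply Rmult_le_reg_r with (/ INR b ^ j). apply Rinv_0_lt_compat; auto. exact H1. }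
  assert (G2 : IZR M < IZR k + 2).
  { apply Rmult_lt_reg_r with (/ INR b ^ j). apply Rinv_0_lt_compat; auto. exact H2. }
  assert (k - 1 <= M)%Z by (apply le_IZR; rewrite minus_IZR; simpl; lra).
  assert (M < k + 2)%Z by (apply lt_IZR; rewrite plus_IZR; simpl; lra).
  assert (test b j k i = true).
  { apply test_iff; auto. exists (M - k)%Z. split. lia. replace (k + (M - k))%Z with M by lia.
    unfold M. apply Z.divide_factor_r. }
  congruence. Qed.

Lemma sumR_eqb c n : sumR (fun v => if Nat.eqb v c then 1 else 0) n <= 1.
Proof. assert (sumR (fun v => if Nat.eqb v c then 1 else 0) n = if Nat.ltb c n then 1 else 0).
  { induction n; simpl; auto. rewrite IHn. destruct (Nat.eqb n c) eqn:E1; destruct (Nat.ltb c n) eqn:E2;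
    destruct (Nat.ltb c (S n)) eqn:E3;
    rewrite ?Nat.eqb_eq, ?Nat.eqb_neq, ?Nat.ltb_lt, ?Nat.ltb_ge in *; try lia; lra. }
  rewrite H. destruct (Nat.ltb c n); lra. Qed.

Definition ind (P : bool) : R := if P then 1 else 0.

Lemma ind_nonneg P : 0 <= ind P.
Proof. unfold ind; destruct P; lra. Qed.

Lemma count_test b j i : (2 <= b)%nat -> (i <= j)%nat ->
  sumR (fun k => ind (test b j (Z.of_nat k) i)) (b ^ j) <= 3 * INR (b ^ i).
Proof. intros Hb Hij. replace (b ^ j)%nat with (b ^ i * b ^ (j - i))%nat
    by (rewrite <- Nat.pow_add_r; f_equal; lia).
  rewrite sumR_block. set (Dn := (b ^ (j - i))%nat).
  assert (HDn : (0 < Dn)%nat) by (unfold Dn; apply Nat.neq_0_lt_0, Nat.pow_nonzero; lia).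
  apply Rle_trans with (sumR (fun _ => 3) (b ^ i)); [|rewrite sumR_const; lra].
  apply sumR_le. intros u Hu.
  apply Rle_trans with (sumR (fun v => (if Nat.eqb v 0 then 1 else 0) + (if Nat.eqb v 1 then 1 else 0)
     + (if Nat.eqb v (Dn - 1) then 1 else 0)) Dn).
  - apply sumR_le. intros v Hv. unfold ind. destruct (test b j (Z.of_nat (u * Dn + v)) i) eqn:E.
    + apply test_iff in E; [|lia]. destruct E as [e [He Hd]].
      fold Dn in Hd. rewrite Nat2Z.inj_add, Nat2Z.inj_mul in Hd.
      assert (Hd2 : (Z.of_nat Dn | Z.of_nat v + e)%Z).
      { apply (Z.divide_add_cancel_r (Z.of_nat Dn) (Z.of_nat u * Z.of_nat Dn)). apply Z.divide_factor_r.
        replace (Z.of_nat u * Z.of_nat Dn + (Z.of_nat v + e))%Z with (Z.of_nat u * Z.of_nat Dn + Z.of_nat v + e)%Z by lia. auto. }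
      destruct Hd2 as [t Ht].
      assert (t = 0 \/ t = 1 \/ t = -1)%Z by nia.
      assert (v = 0 \/ v = 1 \/ v = Dn - 1)%nat as [Hv0|[Hv0|Hv0]] by nia.
      * rewrite <- Nat.eqb_eq in Hv0. rewrite Hv0. destruct (Nat.eqb v 1), (Nat.eqb v (Dn - 1)); lra.
      * rewrite <- Nat.eqb_eq in Hv0. rewrite Hv0. destruct (Nat.eqb v 0), (Nat.eqb v (Dn - 1)); lra.
      * rewrite <- Nat.eqb_eq in Hv0. rewrite Hv0. destruct (Nat.eqb v 0), (Nat.eqb v 1); lra.
    + destruct (Nat.eqb v 0), (Nat.eqb v 1), (Nat.eqb v (Dn - 1)); lra.
  - rewrite !sumR_plus. pose proof (sumR_eqb 0 Dn). pose proof (sumR_eqb 1 Dn). pose proof (sumR_eqb (Dn-1) Dn). lra. Qed.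

Lemma mlev_big b j u : (2 <= b)%nat -> (2 <= j)%nat -> (u < b ^ (j - 2))%nat ->
  (j - 1 <= mlev b j (Z.of_nat (b ^ 2 * u + 2)))%nat.
Proof. intros Hb Hj Hu. destruct (mlev_spec b j (Z.of_nat (b ^ 2 * u + 2)) ltac:(lia)) as [H1 [H2 H3]].
  destruct (Nat.le_gt_cases (j - 1) (mlev b j (Z.of_nat (b ^ 2 * u + 2)))) as [|Hlt]; auto.
  exfalso. apply test_iff in H1; [|lia]. destruct H1 as [e [He Hd]].
  assert (Hd2 : (Z.of_nat (b ^ 2) | Z.of_nat (b ^ 2 * u + 2) + e)%Z).
  { eapply Z.divide_trans; [apply pow_dvd_Z|apply Hd]. lia. }
  rewrite Nat2Z.inj_add, Nat2Z.inj_mul in Hd2.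
  assert (Hd3 : (Z.of_nat (b ^ 2) | 2 + e)%Z).
  { apply (Z.divide_add_cancel_r _ (Z.of_nat (b ^ 2) * Z.of_nat u)). apply Z.divide_factor_l.
    replace (Z.of_nat (b ^ 2) * Z.of_nat u + (2 + e))%Z with (Z.of_nat (b ^ 2) * Z.of_nat u + Z.of_nat 2 + e)%Z by (change (Z.of_nat 2) with 2%Z; lia). auto. }
  apply Z.divide_pos_le in Hd3; [|lia].
  assert (4 <= b ^ 2)%nat by (simpl; nia). lia. Qed.

Lemma mlev_zero b j : (1 <= b)%nat -> mlev b j 0 = 0%nat.
Proof. intros Hb. destruct (mlev_spec b j 0 Hb) as [H1 [H2 H3]].
  destruct (mlev b j 0) eqn:E; auto. assert (test b j 0 0 = true).
  { apply test_iff; auto. exists 0%Z. split. lia. apply Z.divide_0_r. }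
  rewrite H3 in H; [discriminate|lia]. Qed.

Lemma floor_unique x M : IZR M <= x < IZR M + 1 -> Int_part x = M.
Proof. intros [H1 H2]. destruct (base_Int_part x) as [G1 G2].
  assert (Int_part x < M + 1)%Z by (apply lt_IZR; rewrite plus_IZR; simpl; lra).
  assert (M < Int_part x + 1)%Z by (apply lt_IZR; rewrite plus_IZR; simpl; lra). lia. Qed.

Lemma saw_int N : saw (IZR N) = 0.
Proof. unfold saw. rewrite (floor_unique (IZR N) N) by lra. destruct Req_EM_T; auto. lra. Qed.

Lemma saw_lin x M : IZR M < x < IZR M + 1 -> saw x = x - IZR M - 1/2.
Proof. intros H. unfold saw. rewrite (floor_unique x M) by lra. destruct Req_EM_T; lra. Qed.

Lemma saw_bound x : Rabs (saw x) <= 1/2.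
Proof. unfold saw. destruct (base_Int_part x) as [G1 G2].
  assert (H := floor_unique x (Int_part x)).
  destruct Req_EM_T as [E|E].
  - rewrite Rabs_R0; lra.
  - apply Rabs_le. lra. Qed.

Definition Dsaw (x h : R) := saw (x + 2 * h) - 2 * saw (x + h) + saw x.

Lemma Dsaw_bound x h : Rabs (Dsaw x h) <= 2.
Proof. unfold Dsaw. pose proof (saw_bound (x + 2*h)). pose proof (saw_bound (x + h)). pose proof (saw_bound x).
  apply Rabs_le. apply Rabs_le_between in H. apply Rabs_le_between in H0. apply Rabs_le_between in H1. lra. Qed.

Lemma Dsaw_lin u v x h : (forall N, ~ (u <= IZR N < v)) ->
  u <= x < v -> u <= x + h < v -> u <= x + 2 * h < v -> Dsaw x h = 0.
Proof. intros HN H1 H2 H3. destruct (base_Int_part u) as [G1 G2]. set (M := Int_part u) in *.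
  assert (IZR M <> u) by (intros E; apply (HN M); lra).
  assert (~ (IZR (M + 1) < v)) by (intros E; apply (HN (M+1)%Z); rewrite plus_IZR in *; simpl in *; lra).
  rewrite plus_IZR in H0. simpl in H0.
  unfold Dsaw. rewrite (saw_lin x M), (saw_lin (x + h) M), (saw_lin (x + 2 * h) M) by lra. ring. Qed.

Lemma Dsaw_jump M d : 0 < d -> 2 * d < 1 -> Dsaw (IZR M) d = 1/2.
Proof. intros H1 H2. unfold Dsaw. rewrite saw_int, (saw_lin (IZR M + d) M), (saw_lin (IZR M + 2 * d) M) by lra. ring. Qed.

Definition qq (b : nat) (a : R) : R := Rpower (INR b) (- a).

Lemma lnB_pos b : (2 <= b)%nat -> 0 < ln (INR b).
Proof. intros H. rewrite <- ln_1. apply ln_increasing. lra. replace 1 with (INR 1) by auto. apply lt_INR. lia. Qed.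

Lemma qq_bounds b a : (2 <= b)%nat -> 0 < a -> 0 < qq b a < 1.
Proof. intros Hb Ha. unfold qq, Rpower. split. apply exp_pos. rewrite <- exp_0. apply exp_increasing.
  pose proof (lnB_pos b Hb). nra. Qed.

Lemma ln_qq b a : ln (qq b a) = - a * ln (INR b).
Proof. unfold qq, Rpower. rewrite ln_exp. auto. Qed.

Lemma Rpower_term b a n : (2 <= b)%nat -> Rpower (INR b) (- a * INR n) = qq b a ^ n.
Proof. intros Hb. unfold qq. rewrite <- Rpower_pow. rewrite Rpower_mult. auto. unfold Rpower. apply exp_pos. Qed.

Lemma pow_le1 q n : 0 <= q <= 1 -> q ^ n <= 1.
Proof. intros Hq. induction n; simpl; [lra|]. assert (0 <= q ^ n) by (apply pow_le; lra). nra. Qed.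

Lemma pow_decr q n m : 0 <= q <= 1 -> (n <= m)%nat -> q ^ m <= q ^ n.
Proof. intros Hq Hnm. replace m with (n + (m - n))%nat by lia. rewrite pow_add.
  assert (0 <= q ^ n) by (apply pow_le; lra). assert (q ^ (m - n) <= 1) by (apply pow_le1; lra).
  assert (0 <= q ^ (m - n)) by (apply pow_le; lra). nra. Qed.

Lemma ex_series_geomb (a : nat -> R) M q : 0 <= q < 1 -> (forall n, Rabs (a n) <= M * q ^ n) -> ex_series a.
Proof. intros Hq H. apply ex_series_Rabs. apply (ex_series_le (fun n => Rabs (a n)) (fun n => M * q ^ n)).
  - intros n. change (norm (Rabs (a n))) with (Rabs (Rabs (a n))). rewrite Rabs_Rabsolu. auto.
  - exists (M * / (1 - q)). apply (is_series_scal_l M (fun n => q ^ n)). apply is_series_geom. rewrite Rabs_pos_eq; lra. Qed.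

Lemma Series_geomb M q N : 0 <= q < 1 -> Series (fun k => M * q ^ N * q ^ k) = M * q ^ N / (1 - q).
Proof. intros Hq. rewrite Series_scal_l. rewrite (is_series_unique _ (/ (1 - q))). auto.
  apply is_series_geom. rewrite Rabs_pos_eq; lra. Qed.

Lemma split_series (a : nat -> R) N : ex_series a -> Series a = sumR a N + Series (fun k => a (N + k)%nat).
Proof. intros Ha. destruct N.
  - simpl. rewrite Rplus_0_l. apply Series_ext. auto.
  - rewrite (Series_incr_n a (S N)) by (auto; lia). simpl pred. f_equal.
    clear. induction N; simpl; [lra|]. simpl in IHN. rewrite IHN. auto. Qed.

Lemma tail_bound (a : nat -> R) M q N : 0 <= q < 1 -> (forall n, Rabs (a n) <= M * q ^ n) ->
  Rabs (Series (fun k => a (N + k)%nat)) <= M * q ^ N / (1 - q).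
Proof. intros Hq H. assert (HB : forall k, Rabs (a (N + k)%nat) <= M * q ^ N * q ^ k).
  { intros k. rewrite Rmult_assoc, <- pow_add. auto. }
  assert (ex_series (fun k => M * q ^ N * q ^ k)).
  { exists (M * q ^ N * / (1 - q)). apply (is_series_scal_l (M * q ^ N) (fun n => q ^ n)). apply is_series_geom. rewrite Rabs_pos_eq; lra. }
  eapply Rle_trans. apply Series_Rabs.
  apply (ex_series_geomb _ (M * q ^ N) q); auto. intros k. rewrite Rabs_Rabsolu. auto.
  rewrite <- Series_geomb by auto. apply Series_le; auto. intros n; split; [apply Rabs_pos|auto]. Qed.

Lemma saw_term_bound q y n : 0 < q < 1 -> Rabs (saw y * q ^ S n) <= (q / 2) * q ^ n.
Proof. intros Hq. rewrite Rabs_mult, (Rabs_pos_eq (q ^ S n)) by (apply pow_le; lra).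
  pose proof (saw_bound y). simpl. assert (0 <= q ^ n) by (apply pow_le; lra).
  assert (0 <= q * q ^ n) by nra. nra. Qed.

Lemma levy_delta b a x h : (2 <= b)%nat -> 0 < a ->
  delta2 (levy b a) x h = Series (fun n => Dsaw (INR b ^ S n * x) (INR b ^ S n * h) * qq b a ^ S n).
Proof. intros Hb Ha. pose proof (qq_bounds b a Hb Ha) as Hq. set (q := qq b a) in *.
  unfold delta2, levy.
  assert (E : forall z, Series (fun n => saw (INR b ^ S n * z) * Rpower (INR b) (- a * INR (S n)))
                  = Series (fun n => saw (INR b ^ S n * z) * q ^ S n)).
  { intros z. apply Series_ext. intros n. rewrite Rpower_term; auto. }
  rewrite !E.
  assert (X : forall z, ex_series (fun n => saw (INR b ^ S n * z) * q ^ S n)).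
  { intros z. apply (ex_series_geomb _ (q/2) q). lra. intros n. apply saw_term_bound; auto. }
  rewrite <- Series_scal_l, <- Series_minus, <- Series_plus.
  - apply Series_ext. intros n. unfold Dsaw.
    replace (INR b ^ S n * (x + 2 * h)) with (INR b ^ S n * x + 2 * (INR b ^ S n * h)) by ring.
    replace (INR b ^ S n * (x + h)) with (INR b ^ S n * x + INR b ^ S n * h) by ring. ring.
  - apply (ex_series_geomb _ (3 * q / 2) q). lra. intros n.
    pose proof (saw_term_bound q (INR b ^ S n * (x + 2 * h)) n Hq).
    pose proof (saw_term_bound q (INR b ^ S n * (x + h)) n Hq).
    apply Rabs_le_between in H. apply Rabs_le_between in H0. apply Rabs_le. lra.
  - apply X.
  - apply X.
  - apply (ex_series_geomb _ q q). lra. intros n.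
    pose proof (saw_term_bound q (INR b ^ S n * (x + h)) n Hq).
    apply Rabs_le_between in H. apply Rabs_le. lra. Qed.

Definition W (b j : nat) (k : Z) (x : R) := (IZR k - 1) / INR b ^ j <= x < (IZR k + 2) / INR b ^ j.

Lemma term_zero b j k i x h : (1 <= b)%nat -> (i <= j)%nat -> test b j k i = false ->
  W b j k x -> W b j k (x + h) -> W b j k (x + 2 * h) -> Dsaw (INR b ^ i * x) (INR b ^ i * h) = 0.
Proof. intros Hb Hij Ht H1 H2 H3. pose proof (Bpos b i Hb) as Hp. unfold W in *.
  apply (Dsaw_lin (INR b ^ i * ((IZR k - 1) / INR b ^ j)) (INR b ^ i * ((IZR k + 2) / INR b ^ j))).
  - intros N HN. apply (test_false_real b j k i Hb Hij Ht N). split.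
    + apply Rmult_le_reg_l with (INR b ^ i); auto. replace (INR b ^ i * (IZR N / INR b ^ i)) with (IZR N) by (field; lra). lra.
    + apply Rmult_lt_reg_l with (INR b ^ i); auto. replace (INR b ^ i * (IZR N / INR b ^ i)) with (IZR N) by (field; lra). lra.
  - split; [apply Rmult_le_compat_l|apply Rmult_lt_compat_l]; lra.
  - rewrite <- Rmult_plus_distr_l. split; [apply Rmult_le_compat_l|apply Rmult_lt_compat_l]; lra.
  - replace (INR b ^ i * x + 2 * (INR b ^ i * h)) with (INR b ^ i * (x + 2 * h)) by ring.
    split; [apply Rmult_le_compat_l|apply Rmult_lt_compat_l]; lra. Qed.

Lemma W_mid b j k x h : W b j k x -> W b j k (x + 2 * h) -> W b j k (x + h).
Proof. unfold W. lra. Qed.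

Lemma Dterm_bound b a x h n : (2 <= b)%nat -> 0 < a ->
  Rabs (Dsaw (INR b ^ S n * x) (INR b ^ S n * h) * qq b a ^ S n) <= (2 * qq b a) * qq b a ^ n.
Proof. intros Hb Ha. pose proof (qq_bounds b a Hb Ha). assert (0 <= qq b a ^ S n) by (apply pow_le; lra).
  rewrite Rabs_mult, (Rabs_pos_eq (qq b a ^ S n)) by auto.
  pose proof (Dsaw_bound (INR b ^ S n * x) (INR b ^ S n * h)). change (qq b a ^ S n) with (qq b a * qq b a ^ n).
  assert (0 <= qq b a * qq b a ^ n) by (apply Rmult_le_pos; [lra|apply pow_le; lra]). nra. Qed.

Lemma core_up b a j k x h : (2 <= b)%nat -> 0 < a -> W b j k x -> W b j k (x + 2 * h) ->
  Rabs (delta2 (levy b a) x h) <= 2 * qq b a ^ (mlev b j k) / (1 - qq b a).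
Proof. intros Hb Ha H1 H3. pose proof (W_mid b j k x h H1 H3) as H2.
  pose proof (qq_bounds b a Hb Ha) as Hq.
  destruct (mlev_spec b j k ltac:(lia)) as [M1 [M2 M3]].
  rewrite levy_delta by auto.
  set (an := fun n => Dsaw (INR b ^ S n * x) (INR b ^ S n * h) * qq b a ^ S n).
  assert (Hb2 : forall n, Rabs (an n) <= (2 * qq b a) * qq b a ^ n) by (intros; apply Dterm_bound; auto).
  rewrite (split_series an (mlev b j k - 1)) by (apply (ex_series_geomb _ (2 * qq b a) (qq b a)); [lra|auto]).
  assert (Z0 : sumR an (mlev b j k - 1) = 0).
  { rewrite (sumR_ext an (fun _ => 0)). rewrite sumR_const; ring.
    intros i Hi. unfold an. rewrite (term_zero b j k (S i)); auto; try lra; try lia. apply M3. lia. }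
  rewrite Z0, Rplus_0_l.
  eapply Rle_trans. apply (tail_bound an (2 * qq b a) (qq b a)); auto; lra.
  unfold Rdiv. apply Rmult_le_compat_r. left; apply Rinv_0_lt_compat; lra.
  rewrite Rmult_assoc. apply Rmult_le_compat_l; [lra|].
  destruct (mlev b j k) as [|m]. simpl; lra. replace (S m - 1)%nat with m by lia. simpl; lra. Qed.

Lemma core_low b a j k : (2 <= b)%nat -> 0 < a ->
  exists x h, W b j k x /\ W b j k (x + 2 * h) /\
    qq b a ^ (S (mlev b j k)) / 4 <= Rabs (delta2 (levy b a) x h).
Proof. intros Hb Ha. pose proof (qq_bounds b a Hb Ha) as Hq. set (q := qq b a) in *.
  destruct (mlev_spec b j k ltac:(lia)) as [M1 [M2 M3]]. set (m := mlev b j k) in *.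
  destruct (pow_lt_1_zero q ltac:(rewrite Rabs_pos_eq; lra) (q * (1 - q) / 8) ltac:(nra)) as [t Ht].
  specialize (Ht t (le_n t)). rewrite Rabs_pos_eq in Ht by (apply pow_le; lra).
  assert (Ht0 : (1 <= t)%nat) by (destruct t; [simpl in Ht; nra|lia]).
  set (T := (j + t)%nat).
  destruct (test_true_real b j k m ltac:(lia) M2 M1) as [N [HN1 HN2]].
  set (B := INR b) in *.
  assert (HB1 : 1 <= B) by (unfold B; replace 1 with (INR 1) by auto; apply le_INR; lia).
  assert (HBj : 0 < B ^ j) by (apply pow_lt; lra).
  assert (HBT : B ^ j <= B ^ T) by (apply Rle_pow; auto; unfold T; lia).
  set (x := IZR N / B ^ m) in *. set (h := / (4 * B ^ T)) in *.
  assert (Hh : 0 < 2 * h <= / B ^ j / 2).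
  { unfold h. split. apply Rmult_lt_0_compat; [lra|]. apply Rinv_0_lt_compat; lra.
    rewrite Rinv_mult. unfold Rdiv. assert (/ B ^ T <= / B ^ j) by (apply Rinv_le_contravar; lra). lra. }
  assert (Hk : (IZR k + 1) / B ^ j + / B ^ j = (IZR k + 2) / B ^ j) by (field; lra).
  assert (Hinv : 0 < / B ^ j) by (apply Rinv_0_lt_compat; lra).
  assert (Wx : W b j k x).
  { unfold W. fold B. split; [lra|]. lra. }
  assert (Wx2 : W b j k (x + 2 * h)).
  { unfold W. fold B. split; lra. }
  exists x, h. split; auto. split; auto.
  pose proof (W_mid b j k x h Wx Wx2) as Wx1.
  rewrite levy_delta by auto. fold q. fold B.
  set (an := fun n => Dsaw (B ^ S n * x) (B ^ S n * h) * q ^ S n).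
  assert (Hb2 : forall n, Rabs (an n) <= (2 * q) * q ^ n) by (intros; apply Dterm_bound; auto).
  rewrite (split_series an T) by (apply (ex_series_geomb _ (2 * q) q); [lra|auto]).
  assert (Hterm : forall n, (n < T)%nat -> (m <= S n)%nat -> an n = q ^ S n / 2).
  { intros n Hn Hmn. unfold an, x. unfold B. rewrite (div_split b m (S n) N) by lia. fold B.
    set (M := (N * Z.of_nat (b ^ (S n - m)))%Z).
    assert (HBn : 0 < B ^ S n) by (apply pow_lt; lra).
    replace (B ^ S n * (IZR M / B ^ S n)) with (IZR M) by (field; lra).
    rewrite Dsaw_jump. field.
    - unfold h. apply Rmult_lt_0_compat; auto. apply Rinv_0_lt_compat. lra.
    - assert (B ^ S n <= B ^ T) by (apply Rle_pow; auto; lia).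
      unfold h. rewrite Rinv_mult.
      assert (B ^ S n * / B ^ T <= 1).
      { apply Rmult_le_reg_r with (B ^ T). lra. rewrite Rmult_assoc, Rinv_l by lra. lra. }
      lra. }
  assert (Hnn : forall n, (n < T)%nat -> 0 <= an n).
  { intros n Hn. destruct (le_lt_dec m (S n)) as [Hge|Hlt].
    - rewrite Hterm by auto. assert (0 <= q ^ S n) by (apply pow_le; lra). lra.
    - assert (E0 : Dsaw (INR b ^ S n * x) (INR b ^ S n * h) = 0).
      { apply (term_zero b j k (S n)); auto; try lia. }
      unfold an. fold B in E0. rewrite E0. lra. }
  assert (S1 : q ^ S m / 2 <= sumR an T).
  { eapply Rle_trans; [|apply (sumR_ge_term an T (m - 1)); auto; unfold T; lia].
    rewrite Hterm by (unfold T; lia). apply Rmult_le_compat_r. lra. apply pow_decr. lra. lia. }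
  pose proof (tail_bound an (2 * q) q T ltac:(lra) Hb2) as S2.
  apply Rabs_le_between in S2.
  assert (S3 : 2 * q * q ^ T / (1 - q) <= q ^ S m / 4).
  { unfold T. rewrite pow_add. assert (q ^ j <= q ^ m) by (apply pow_decr; [lra|lia]).
    assert (0 <= q ^ j) by (apply pow_le; lra). assert (0 <= q ^ m) by (apply pow_le; lra).
    assert (0 <= q ^ t) by (apply pow_le; lra).
    assert (q ^ j * q ^ t <= q ^ m * (q * (1 - q) / 8)) by nra.
    apply Rle_trans with (2 * q * (q ^ m * (q * (1 - q) / 8)) / (1 - q)).
    { unfold Rdiv. apply Rmult_le_compat_r. left; apply Rinv_0_lt_compat; lra. nra. }
    replace (2 * q * (q ^ m * (q * (1 - q) / 8)) / (1 - q)) with (q * (q * q ^ m) / 4) by (field; lra).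
    simpl. assert (0 <= q * q ^ m) by nra. nra. }
  eapply Rle_trans; [|apply Rle_abs]. lra. Qed.

Lemma lub_bounds (E : R -> Prop) L U : (exists z, E z /\ L <= z) -> (forall z, E z -> z <= U) ->
  L <= real (Lub_Rbar E) <= U.
Proof. intros [z [Ez Lz]] HU. destruct (Lub_Rbar_correct E) as [H1 H2].
  assert (A1 : Rbar_le z (Lub_Rbar E)) by (apply H1; auto).
  assert (A2 : Rbar_le (Lub_Rbar E) U) by (apply H2; intros w Hw; apply HU; auto).
  destruct (Lub_Rbar E) as [l| |]; simpl in *; try contradiction. lra. Qed.

Lemma in3_W b j k x : in3lambda b j k x <-> W b j (Z.of_nat k) x.
Proof. unfold in3lambda, W. rewrite <- INR_IZR_INZ. tauto. Qed.

Lemma osc1_bounds b a j k : (2 <= b)%nat -> 0 < a ->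
  qq b a ^ S (mlev b j (Z.of_nat k)) / 4 <= osc (levy b a) b j k <= 2 * qq b a ^ (mlev b j (Z.of_nat k)) / (1 - qq b a).
Proof. intros Hb Ha. unfold osc. apply lub_bounds.
  - destruct (core_low b a j (Z.of_nat k) Hb Ha) as [x [h [H1 [H2 H3]]]].
    exists (Rabs (delta2 (levy b a) x h)). split; auto. exists x, h. rewrite !in3_W. auto.
  - intros z [x [h [H1 [H2 ->]]]]. rewrite in3_W in H1, H2. apply core_up; auto. Qed.

Lemma osc2_bounds b a j k m0 Y : (2 <= b)%nat -> 0 < a -> (m0 <= j)%nat ->
  let c := (Y * Z.of_nat (b ^ (j - m0)))%Z in
  qq b a ^ S (mlev b j (Z.of_nat k - c)) / 4 <= osc (levy_shift b a (IZR Y / INR b ^ m0)) b j k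
    <= 2 * qq b a ^ (mlev b j (Z.of_nat k - c)) / (1 - qq b a).
Proof. intros Hb Ha Hj c. set (y := IZR Y / INR b ^ m0).
  assert (Hy : y = IZR c / INR b ^ j) by (unfold y, c; apply div_split; lia).
  assert (HWy : forall x, in3lambda b j k x <-> W b j (Z.of_nat k - c) (x - y)).
  { intros x. rewrite in3_W. unfold W. rewrite minus_IZR, Hy.
    pose proof (Bpos b j ltac:(lia)).
    replace ((IZR (Z.of_nat k) - IZR c - 1) / INR b ^ j) with ((IZR (Z.of_nat k) - 1) / INR b ^ j - IZR c / INR b ^ j) by (field; lra).
    replace ((IZR (Z.of_nat k) - IZR c + 2) / INR b ^ j) with ((IZR (Z.of_nat k) + 2) / INR b ^ j - IZR c / INR b ^ j) by (field; lra).
    lra. }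
  assert (HD : forall x h, delta2 (levy_shift b a y) x h = delta2 (levy b a) (x - y) h).
  { intros x h. unfold delta2, levy_shift. replace (x + 2 * h - y) with (x - y + 2 * h) by ring.
    replace (x + h - y) with (x - y + h) by ring. auto. }
  unfold osc. apply lub_bounds.
  - destruct (core_low b a j (Z.of_nat k - c) Hb Ha) as [x [h [H1 [H2 H3]]]].
    exists (Rabs (delta2 (levy b a) x h)). split; auto. exists (x + y), h.
    rewrite !HWy, HD. replace (x + y - y) with x by ring. replace (x + y + 2 * h - y) with (x + 2 * h) by ring. auto.
  - intros z [x [h [H1 [H2 ->]]]]. rewrite HWy in H1, H2. rewrite HD. apply core_up; auto.
    replace (x - y + 2 * h) with (x + 2 * h - y) by ring. auto. Qed.

Lemma exp_le x y : x <= y -> exp x <= exp y.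
Proof. intros [H|H]. left; apply exp_increasing; auto. subst; lra. Qed.

Lemma INR_bpow b n : (2 <= b)%nat -> INR (b ^ n) = exp (ln (INR b) * INR n).
Proof. intros Hb. rewrite pow_INR. rewrite <- (exp_ln (INR b ^ n)).
  rewrite ln_pow. f_equal; ring. apply lt_0_INR; lia. apply pow_lt, lt_0_INR; lia. Qed.

Definition Gm (l s : R) (m : nat) : R := exp (- l * s * INR m).

Lemma sum_upper b j s : (2 <= b)%nat ->
  sumR (fun k => Gm (ln (INR b)) s (mlev b j (Z.of_nat k))) (b ^ j)
   <= 3 * (INR j + 1) * exp (Rmax 0 (ln (INR b) * (1 - s) * INR j)).
Proof. intros Hb. set (l := ln (INR b)). assert (Hl : 0 < l) by (apply lnB_pos; auto).
  assert (Gpos : forall m, 0 < Gm l s m) by (intros; apply exp_pos).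
  apply Rle_trans with (sumR (fun k => sumR (fun i => ind (test b j (Z.of_nat k) i) * Gm l s i) (S j)) (b ^ j)).
  { apply sumR_le. intros k Hk. destruct (mlev_spec b j (Z.of_nat k) ltac:(lia)) as [M1 [M2 M3]].
    eapply Rle_trans; [|apply (sumR_ge_term _ _ (mlev b j (Z.of_nat k)))].
    - unfold ind. rewrite M1. lra.
    - intros i _. apply Rmult_le_pos. apply ind_nonneg. left; auto.
    - lia. }
  rewrite sumR_swap.
  apply Rle_trans with (sumR (fun _ => 3 * exp (Rmax 0 (l * (1 - s) * INR j))) (S j)).
  2:{ rewrite sumR_const, S_INR. lra. }
  apply sumR_le. intros i Hi.
  rewrite (sumR_ext _ (fun k => Gm l s i * ind (test b j (Z.of_nat k) i))) by (intros; ring).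
  rewrite sumR_scal.
  pose proof (count_test b j i Hb ltac:(lia)).
  apply Rle_trans with (Gm l s i * (3 * INR (b ^ i))).
  { apply Rmult_le_compat_l; auto. left; auto. }
  rewrite INR_bpow by auto. fold l. unfold Gm.
  replace (exp (- l * s * INR i) * (3 * exp (l * INR i))) with (3 * exp (l * (1 - s) * INR i))
    by (replace (exp (- l * s * INR i) * (3 * exp (l * INR i))) with (3 * (exp (- l * s * INR i) * exp (l * INR i))) by ring;
        rewrite <- exp_plus; f_equal; f_equal; ring).
  apply Rmult_le_compat_l; [lra|]. apply exp_le.
  assert (INR i <= INR j) by (apply le_INR; lia). assert (0 <= INR i) by apply pos_INR.
  assert (Hlin : forall t, l * t * INR i <= Rmax 0 (l * t * INR j)).
  { intros t. unfold Rmax. destruct (Rle_dec 0 t) as [Ht|Ht].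
    - assert (0 <= l * t) by nra. destruct Rle_dec; nra.
    - assert (l * t < 0) by nra. destruct Rle_dec; nra. }
  apply Hlin. Qed.

Lemma sum_lower b j s : (2 <= b)%nat -> (2 <= j)%nat ->
  Rmin 1 (exp (ln (INR b) * s - 2 * ln (INR b))) * exp (Rmax 0 (ln (INR b) * (1 - s) * INR j))
   <= sumR (fun k => Gm (ln (INR b)) s (mlev b j (Z.of_nat k))) (b ^ j).
Proof. intros Hb Hj. set (l := ln (INR b)). assert (Hl : 0 < l) by (apply lnB_pos; auto).
  set (f := fun k => Gm l s (mlev b j (Z.of_nat k))).
  assert (fpos : forall k, 0 <= f k) by (intros; left; apply exp_pos).
  assert (Hpow : (0 < b ^ j)%nat) by (apply Nat.neq_0_lt_0, Nat.pow_nonzero; lia).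
  assert (L1 : 1 <= sumR f (b ^ j)).
  { eapply Rle_trans; [|apply (sumR_ge_term f _ 0); auto]. unfold f, Gm. simpl Z.of_nat.
    rewrite mlev_zero by lia. simpl. rewrite Rmult_0_r, exp_0. lra. }
  set (c1 := Rmin 1 (exp (l * s - 2 * l))).
  assert (Hc1 : c1 <= 1) by apply Rmin_l.
  assert (Hc2 : c1 <= exp (l * s - 2 * l)) by apply Rmin_r.
  assert (Hc0 : 0 < c1) by (unfold c1, Rmin; destruct Rle_dec; [lra|apply exp_pos]).
  assert (L2 : c1 * exp (l * (1 - s) * INR j) <= sumR f (b ^ j)).
  { destruct (Rle_dec 0 s) as [Hs|Hs].
    - apply Rle_trans with (sumR (fun _ => Gm l s j) (b ^ j)).
      + rewrite sumR_const, INR_bpow by auto. fold l. unfold Gm. rewrite <- exp_plus.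
        replace (l * INR j + - l * s * INR j) with (l * (1 - s) * INR j) by ring.
        pose proof (exp_pos (l * (1 - s) * INR j)). nra.
      + apply sumR_le. intros k Hk. unfold f, Gm. apply exp_le.
        destruct (mlev_spec b j (Z.of_nat k) ltac:(lia)) as [M1 [M2 M3]].
        assert (INR (mlev b j (Z.of_nat k)) <= INR j) by (apply le_INR; auto).
        assert (0 <= l * s) by nra. nra.
    - replace (b ^ j)%nat with (b ^ (j - 2) * b ^ 2)%nat by (rewrite <- Nat.pow_add_r; f_equal; lia).
      rewrite sumR_block.
      apply Rle_trans with (sumR (fun _ => Gm l s (j - 1)) (b ^ (j - 2))).
      + rewrite sumR_const, INR_bpow by auto. fold l. unfold Gm. rewrite minus_INR, minus_INR by lia.
        rewrite <- exp_plus. simpl INR.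
        apply Rle_trans with (exp (l * s - 2 * l) * exp (l * (1 - s) * INR j)).
        { apply Rmult_le_compat_r; auto. left; apply exp_pos. }
        rewrite <- exp_plus. apply exp_le. lra.
      + apply sumR_le. intros u Hu.
        eapply Rle_trans; [|apply (sumR_ge_term _ _ 2); [intros; apply fpos|]].
        * unfold f, Gm. apply exp_le. rewrite Nat.mul_comm.
          pose proof (mlev_big b j u Hb Hj Hu).
          destruct (mlev_spec b j (Z.of_nat (b ^ 2 * u + 2)) ltac:(lia)) as [M1 [M2 M3]].
          assert (INR (j - 1) <= INR (mlev b j (Z.of_nat (b ^ 2 * u + 2)))) by (apply le_INR; auto).
          assert (l * s <= 0) by nra. nra.
        * assert (4 <= b ^ 2)%nat by (simpl; nia). lia. }
  unfold Rmax. destruct Rle_dec as [H|H].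
  - auto.
  - rewrite exp_0. lra. Qed.

Definition Kq (q : R) : R := Rabs (ln q) + ln 4 + Rabs (ln (2 / (1 - q))).

Lemma log_osc q m d : 0 < q < 1 -> q ^ S m / 4 <= d <= 2 * q ^ m / (1 - q) ->
  0 < d /\ Rabs (ln d - INR m * ln q) <= Kq q.
Proof. intros Hq [H1 H2]. assert (Hqm : 0 < q ^ m) by (apply pow_lt; lra).
  assert (0 < q ^ S m / 4) by (apply Rdiv_lt_0_compat; [apply pow_lt|]; lra).
  assert (Hd : 0 < d) by lra. split; auto.
  assert (E1 : ln (q ^ S m / 4) = INR m * ln q + ln q - ln 4).
  { rewrite ln_div, ln_pow, S_INR by (try apply pow_lt; lra). ring. }
  assert (E2 : ln (2 * q ^ m / (1 - q)) = INR m * ln q + ln (2 / (1 - q))).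
  { replace (2 * q ^ m / (1 - q)) with (q ^ m * (2 / (1 - q))) by (field; lra).
    rewrite ln_mult, ln_pow by (try apply Rdiv_lt_0_compat; lra). ring. }
  assert (L1 := ln_le _ _ H H1). assert (L2 := ln_le _ _ Hd H2).
  rewrite E1 in L1. rewrite E2 in L2.
  assert (0 <= ln 4) by (rewrite <- ln_1; apply ln_le; lra).
  unfold Kq. pose proof (Rle_abs (ln q)). pose proof (Rle_abs (- ln q)). rewrite Rabs_Ropp in H4.
  pose proof (Rle_abs (ln (2 / (1 - q)))). pose proof (Rle_abs (- ln (2 / (1 - q)))). rewrite Rabs_Ropp in H6.
  apply Rabs_le. lra. Qed.

Lemma term_bounds l a1 a2 r1 r2 d1 d2 q1 q2 m1 m2 m0 :
  0 < l -> 0 < a2 -> 0 < q1 < 1 -> 0 < q2 < 1 ->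
  ln q1 = - a1 * l -> ln q2 = - a2 * l ->
  q1 ^ S m1 / 4 <= d1 <= 2 * q1 ^ m1 / (1 - q1) ->
  q2 ^ S m2 / 4 <= d2 <= 2 * q2 ^ m2 / (1 - q2) ->
  (m1 <= m2 + m0)%nat -> (m2 <= m1 + m0)%nat ->
  let K := Rabs r1 * Kq q1 + Rabs r2 * Kq q2 + Rabs r2 * a2 * l * INR m0 in
  exp (- K) * Gm l (a1 * r1 + a2 * r2) m1 <= Rpower d1 r1 * Rpower d2 r2 <=
  exp K * Gm l (a1 * r1 + a2 * r2) m1.
Proof. intros Hl Ha2 Hq1 Hq2 E1 E2 D1 D2 Hm1 Hm2 K.
  destruct (log_osc q1 m1 d1 Hq1 D1) as [P1 B1]. destruct (log_osc q2 m2 d2 Hq2 D2) as [P2 B2].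
  unfold Rpower, Gm. rewrite <- !exp_plus.
  set (e1 := ln d1 - INR m1 * ln q1) in *. set (e2 := ln d2 - INR m2 * ln q2) in *.
  assert (Hdm : Rabs (INR m2 - INR m1) <= INR m0).
  { apply Rabs_le. assert (INR m1 <= INR m2 + INR m0) by (rewrite <- plus_INR; apply le_INR; auto).
    assert (INR m2 <= INR m1 + INR m0) by (rewrite <- plus_INR; apply le_INR; auto). lra. }
  assert (EQ : r1 * ln d1 + r2 * ln d2 = - l * (a1 * r1 + a2 * r2) * INR m1 + (r1 * e1 + r2 * e2 - r2 * a2 * l * (INR m2 - INR m1))).
  { unfold e1, e2. rewrite E1, E2. ring. }
  rewrite EQ.
  assert (Rabs (r1 * e1 + r2 * e2 - r2 * a2 * l * (INR m2 - INR m1)) <= K).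
  { unfold K. eapply Rle_trans. apply Rabs_triang. rewrite Rabs_Ropp.
    eapply Rle_trans. apply Rplus_le_compat_r. apply Rabs_triang.
    rewrite !Rabs_mult. rewrite (Rabs_pos_eq a2), (Rabs_pos_eq l) by lra.
    assert (0 <= Rabs r1) by apply Rabs_pos. assert (0 <= Rabs r2) by apply Rabs_pos.
    assert (Rabs r1 * Rabs e1 <= Rabs r1 * Kq q1) by (apply Rmult_le_compat_l; auto).
    assert (Rabs r2 * Rabs e2 <= Rabs r2 * Kq q2) by (apply Rmult_le_compat_l; auto).
    assert (Rabs r2 * a2 * l * Rabs (INR m2 - INR m1) <= Rabs r2 * a2 * l * INR m0).
    { apply Rmult_le_compat_l; auto. apply Rmult_le_pos; [apply Rmult_le_pos|]; lra. }
    lra. }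
  apply Rabs_le_between in H. split; apply exp_le; lra. Qed.

Lemma lim_aux l K' : 0 < l ->
  is_lim_seq (fun j => 2 * (K' + ln (INR j + 1)) / (l * (INR j + 1))) 0.
Proof. intros Hl.
  assert (U : is_lim_seq (fun j => INR j + 1) p_infty).
  { apply (is_lim_seq_ext (fun j => INR (S j))). intros; apply S_INR.
    apply (is_lim_seq_incr_1 INR p_infty). apply is_lim_seq_INR. }
  assert (V1 : is_lim_seq (fun j => / (INR j + 1)) 0).
  { apply (is_lim_seq_inv _ p_infty) in U; [|discriminate]. simpl in U. auto. }
  assert (V2 : is_lim_seq (fun j => ln (INR j + 1) / (INR j + 1)) 0).
  { apply (is_lim_comp_seq (fun y => ln y / y) (fun j => INR j + 1) p_infty 0).
    apply is_lim_div_ln_p. exists O. intros; discriminate. auto. }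
  assert (V3 := is_lim_seq_plus' _ _ _ _ (is_lim_seq_scal_l _ K' _ V1) V2).
  assert (V4 := is_lim_seq_scal_l _ (2 / l) _ V3). simpl in V4.
  replace (Finite 0) with (Finite (2 / l * (K' * 0 + 0))) by (f_equal; ring).
  eapply is_lim_seq_ext; [|apply V4]. intros j. simpl.
  assert (0 < INR j + 1) by (pose proof (pos_INR j); lra). field. lra. Qed.

Definition Kc b a1 a2 r1 r2 m0 := Rabs r1 * Kq (qq b a1) + Rabs r2 * Kq (qq b a2) + Rabs r2 * a2 * ln (INR b) * INR m0.
Definition c1c b s := Rmin 1 (exp (ln (INR b) * s - 2 * ln (INR b))).
Definition Kpc b a1 a2 r1 r2 m0 := Kc b a1 a2 r1 r2 m0 + Rabs (ln (c1c b (a1 * r1 + a2 * r2))) + ln 3.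

Lemma Rmax_scale c x : 0 < c -> Rmax 0 (c * x) = c * Rmax 0 x.
Proof. intros Hc. unfold Rmax. destruct (Rle_dec 0 (c * x)), (Rle_dec 0 x); nra. Qed.

Lemma per_j b a1 a2 m0 Y r1 r2 j : (2 <= b)%nat -> 0 < a1 -> 0 < a2 -> (m0 <= j)%nat -> (2 <= j)%nat ->
  Rabs (ln (struct_fun b a1 a2 (IZR Y / INR b ^ m0) r1 r2 j) / ln (/ INR b ^ j)
        - (1 - Rmax 0 (1 - (a1 * r1 + a2 * r2))))
  <= 2 * (Kpc b a1 a2 r1 r2 m0 + ln (INR j + 1)) / (ln (INR b) * (INR j + 1)).
Proof. intros Hb Ha1 Ha2 Hm0 Hj.
  set (l := ln (INR b)). assert (Hl : 0 < l) by (apply lnB_pos; auto).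
  set (s := a1 * r1 + a2 * r2).
  set (K := Kc b a1 a2 r1 r2 m0). set (c1 := c1c b s).
  set (M := Rmax 0 (l * (1 - s) * INR j)).
  set (G := fun k => Gm l s (mlev b j (Z.of_nat k))).
  set (Tk := fun k => Rpower (osc (levy b a1) b j k) r1 * Rpower (osc (levy_shift b a2 (IZR Y / INR b ^ m0)) b j k) r2).
  assert (HT : forall k, exp (- K) * G k <= Tk k <= exp K * G k).
  { intros k. unfold Tk, G, K, Kc. fold l.
    set (c := (Y * Z.of_nat (b ^ (j - m0)))%Z).
    destruct (mlev_diff b j m0 (Z.of_nat k) c ltac:(lia) Hm0 ltac:(apply Z.divide_factor_r)) as [D1 D2].
    apply (term_bounds l a1 a2 r1 r2 _ _ (qq b a1) (qq b a2) _ (mlev b j (Z.of_nat k - c)) m0); auto.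
    - apply qq_bounds; auto.
    - apply qq_bounds; auto.
    - apply ln_qq.
    - apply ln_qq.
    - apply osc1_bounds; auto.
    - apply (osc2_bounds b a2 j k m0 Y); auto. }
  assert (Hpow : (0 < b ^ j)%nat) by (apply Nat.neq_0_lt_0, Nat.pow_nonzero; lia).
  assert (SU := sum_upper b j s Hb). assert (SL := sum_lower b j s Hb Hj).
  fold l G M in SU, SL. fold l in SL. change (Rmin 1 (exp (l * s - 2 * l))) with c1 in SL.
  assert (Hc1 : 0 < c1 <= 1).
  { unfold c1, c1c. fold l. split. unfold Rmin; destruct Rle_dec; [lra|apply exp_pos]. apply Rmin_l. }
  assert (HeM : 0 < exp M) by apply exp_pos.
  assert (TL : exp (- K) * (c1 * exp M) <= sumR Tk (b ^ j)).
  { apply Rle_trans with (sumR (fun k => exp (- K) * G k) (b ^ j)).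
    - rewrite sumR_scal. apply Rmult_le_compat_l; [left; apply exp_pos|]. auto.
    - apply sumR_le; intros; apply HT. }
  assert (TU : sumR Tk (b ^ j) <= exp K * (3 * (INR j + 1) * exp M)).
  { apply Rle_trans with (sumR (fun k => exp K * G k) (b ^ j)).
    - apply sumR_le; intros; apply HT.
    - rewrite sumR_scal. apply Rmult_le_compat_l; [left; apply exp_pos|]. auto. }
  assert (HposL : 0 < exp (- K) * (c1 * exp M)) by (apply Rmult_lt_0_compat; [apply exp_pos|nra]).
  assert (Hj1 : 0 < INR j + 1) by (pose proof (pos_INR j); lra).
  assert (LL := ln_le _ _ HposL TL).
  assert (HsT0 : 0 < sumR Tk (b ^ j)) by lra.
  assert (LU := ln_le _ _ HsT0 TU).
  rewrite ln_mult, ln_mult, ln_exp, ln_exp in LL by (first [apply exp_pos | nra]).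
  rewrite ln_mult, ln_mult, ln_mult, ln_exp, ln_exp in LU by (first [apply exp_pos | lra | nra | (apply Rmult_lt_0_compat; nra)]).
  assert (Hlnc : ln c1 <= 0) by (rewrite <- ln_1; apply ln_le; lra).
  assert (Hln3 : 0 <= ln 3) by (rewrite <- ln_1; apply ln_le; lra).
  assert (Hlnj : 0 <= ln (INR j + 1)) by (rewrite <- ln_1; apply ln_le; [lra|]; pose proof (pos_INR j); lra).
  set (X := ln (sumR Tk (b ^ j)) - M).
  set (Zb := Kpc b a1 a2 r1 r2 m0 + ln (INR j + 1)).
  assert (HK0 : 0 <= K).
  { unfold K, Kc, Kq. pose proof (Rabs_pos r1). pose proof (Rabs_pos r2). pose proof (Rabs_pos (ln (qq b a1))).
    pose proof (Rabs_pos (ln (qq b a2))). pose proof (Rabs_pos (ln (2 / (1 - qq b a1)))). pose proof (Rabs_pos (ln (2 / (1 - qq b a2)))).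
    assert (0 <= ln 4) by (rewrite <- ln_1; apply ln_le; lra). pose proof (pos_INR m0). fold l.
    assert (0 <= Rabs r2 * a2 * l * INR m0) by (repeat apply Rmult_le_pos; lra). nra. }
  assert (HX : Rabs X <= Zb).
  { unfold Zb, Kpc. fold K s. fold c1. unfold X. rewrite (Rabs_left1 (ln c1)) by auto. apply Rabs_le. lra. }
  assert (HJ : 0 < INR j) by (apply lt_0_INR; lia).
  assert (HBj : 0 < INR b ^ j) by (apply pow_lt, lt_0_INR; lia).
  assert (Hln : ln (/ INR b ^ j) = - (l * INR j)).
  { rewrite ln_Rinv, ln_pow by (try apply lt_0_INR; lia || lra). fold l. ring. }
  unfold struct_fun. rewrite sum_n_sumR by auto. fold Tk.
  assert (HsT : 0 < sumR Tk (b ^ j)) by lra.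
  rewrite ln_mult by (try apply Rinv_0_lt_compat; lra). rewrite Hln.
  assert (HM : M = l * INR j * Rmax 0 (1 - s)).
  { unfold M. rewrite <- Rmax_scale by nra. f_equal. ring. }
  replace ((- (l * INR j) + ln (sumR Tk (b ^ j))) / - (l * INR j) - (1 - Rmax 0 (1 - s)))
    with (- X / (l * INR j)) by (unfold X; rewrite HM; field; lra).
  unfold Rdiv. rewrite Rabs_mult, Rabs_Ropp, Rabs_inv, (Rabs_pos_eq (l * INR j)) by nra.
  assert (Hi : / (l * INR j) <= 2 * / (l * (INR j + 1))).
  { replace (2 * / (l * (INR j + 1))) with (/ (l * (INR j + 1) / 2)) by (field; lra).
    apply Rinv_le_contravar. nra. assert (1 <= INR j) by (replace 1 with (INR 1) by auto; apply le_INR; lia). nra. }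
  fold Zb. assert (0 < / (l * INR j)) by (apply Rinv_0_lt_compat; nra).
  pose proof (Rabs_pos X).
  apply Rle_trans with (Zb * / (l * INR j)). apply Rmult_le_compat_r; lra.
  replace (2 * Zb * / (l * (INR j + 1))) with (Zb * (2 * / (l * (INR j + 1)))) by ring.
  apply Rmult_le_compat_l. lra. auto. Qed.

Theorem mainTheorem4 (b : nat) (a1 a2 y : R) :
  (2 <= b)%nat -> 0 < a1 -> 0 < a2 ->
  0 <= y < 1 -> b_adic b y ->
  forall r1 r2 : R,
    scaling_fun b a1 a2 y r1 r2 =
    Finite (if Rle_dec 0 (1 - a1 * r1 - a2 * r2) then a1 * r1 + a2 * r2 else 1).
Proof. intros Hb Ha1 Ha2 Hy [m0 [Y HY]] r1 r2. subst y.
  set (zeta := if Rle_dec 0 (1 - a1 * r1 - a2 * r2) then a1 * r1 + a2 * r2 else 1).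
  assert (Hz : zeta = 1 - Rmax 0 (1 - (a1 * r1 + a2 * r2))).
  { unfold zeta, Rmax. destruct (Rle_dec 0 (1 - a1 * r1 - a2 * r2)), (Rle_dec 0 (1 - (a1 * r1 + a2 * r2))); lra. }
  set (w := fun j => 2 * (Kpc b a1 a2 r1 r2 m0 + ln (INR j + 1)) / (ln (INR b) * (INR j + 1))).
  assert (Hw : is_lim_seq w 0) by (apply lim_aux, lnB_pos; auto).
  unfold scaling_fun. apply is_LimInf_seq_unique, is_lim_LimInf_seq.
  apply is_lim_seq_le_le_loc with (u := fun j => zeta - w j) (w := fun j => zeta + w j).
  - exists (Nat.max m0 2). intros j Hj.
    pose proof (per_j b a1 a2 m0 Y r1 r2 j Hb Ha1 Ha2 ltac:(lia) ltac:(lia)) as H.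
    rewrite <- Hz in H. fold (w j) in H. apply Rabs_le_between in H. lra.
  - replace (Finite zeta) with (Finite (zeta - 0)) by (f_equal; ring).
    apply is_lim_seq_minus'; auto. apply is_lim_seq_const.
  - replace (Finite zeta) with (Finite (zeta + 0)) by (f_equal; ring).
    apply is_lim_seq_plus'; auto. apply is_lim_seq_const. Qed.
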